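(* Let $(B,\lfloor\cdot,\cdot\rfloor,\|\cdot\|)$ be an SSDB space, $q(b):=\tfrac12\lfloor b,b\rfloor$, $g_0:=\tfrac12\|\cdot\|^2$. Then: (a) if $f$ is a BC--function on $B$ then ${\cal P}_q(f)-{\cal N}_q(g_0)=B$; (b) if $A$ is a $q$--positive subset of $B$ with $A-{\cal N}_q(g_0)=B$, then $A$ is maximally $q$--positive; (c) if $f$ is a BC--function on $B$ then ${\cal P}_q(f)$ is maximally $q$--positive and ${\cal P}_q(f^@)={\cal P}_q(f)$; (d) if $A$ is a $q$--positive subset of $B$, then $A$ is maximally $q$--positive if and only if $A-{\cal N}_q(g_0)=B$.
   Context: An SSDB space is a triple $(B,\lfloor\cdot,\cdot\rfloor,\|\cdot\|)$ where $B$ is a nonzero real vector space, $\lfloor\cdot,\cdot\rfloor$ a symmetric bilinear form on $B$, $(B,\|\cdot\|)$ a Banach space, and there is a linear isometry $\iota$ of $B$ onto its dual $B^*$ with $\langle b,\iota(c)\rangle=\lfloor b,c\rfloor$ for all $b,c$. For proper convex $f\colon B\to\,]{-}\infty,\infty]$, $f^@(c):=\sup_{b\in B}[\lfloor b,c\rfloor-f(b)]$. A BC--function is a proper convex $f$ with $f^@(b)\ge f(b)\ge q(b)$ for all $b$. ${\cal P}_q(h):=\{b\colon h(b)=q(b)\}$ for $h\ge q$, ${\cal N}_q(h):=\{b\colon h(b)=-q(b)\}$ for $h\ge -q$. $A$ is $q$--positive if $A\ne\emptyset$ and $q(b-c)\ge0$ for all $b,c\in A$; maximally $q$--positive if moreover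 it is not properly contained in another $q$--positive set. *)

(* Defs.v *)
From HB Require Import structures.
From mathcomp Require Import all_boot all_order all_algebra.
From mathcomp Require Import all_classical all_reals all_analysis.
Set Implicit Arguments. Unset Strict Implicit. Unset Printing Implicit Defensive.
Import Order.TTheory GRing.Theory Num.Theory.
Import numFieldNormedType.Exports.
Local Open Scope classical_set_scope.
Local Open Scope ring_scope.

Section Defs.
Variables (R : realType) (B : completeNormedModType R).

Definition symmetric_bilinear (bf : B -> B -> R) : Prop :=
  (forall b c, bf b c = bf c b) /\
  (forall (s t : R) (x y c : B), bf (s *: x + t *: y) c = s * bf x c + t * bf y c).

Definition linear_functional (phi : B -> R) : Prop :=
  forall (s t : R) (x y : B), phi (s *: x + t *: y) = s * phi x + t * phi y.

(* SSDB space: B nonzero Banach space (given by B : completeNormedModType R),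
   bf symmetric bilinear, and c |-> bf . c is a linear isometry of B ONTO B^*,
   where B^* carries the operator norm.  The isometry condition says that the
   operator norm sup_{||b||<=1} |bf b c| of the functional bf . c equals ||c||. *)
Definition SSDB (bf : B -> B -> R) : Prop :=
  [/\ exists b : B, b != 0,
      symmetric_bilinear bf,
      (forall c : B,
          (forall b : B, `|bf b c| <= `|b| * `|c|) /\
          (forall e : R, 0 < e -> exists b : B, `|b| <= 1 /\ `|c| - e < `|bf b c|))
    &
      (forall phi : B -> R, linear_functional phi -> continuous phi ->
          exists c : B, forall b : B, phi b = bf b c)].

Definition qf (bf : B -> B -> R) (b : B) : R := 2^-1 * bf b b.
Definition g0 (b : B) : R := 2^-1 * `|b| ^+ 2.

Definition proper_convex (f : B -> \bar R) : Prop :=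
  [/\ forall b, f b != -oo%E,
      exists b, f b != +oo%E
    & forall (x y : B) (t : R), 0 < t < 1 ->
        (f (t *: x + (1 - t) *: y)%R <= t%:E * f x + (1 - t)%:E * f y)%E].

Definition fat (bf : B -> B -> R) (f : B -> \bar R) (c : B) : \bar R :=
  ereal_sup [set ((bf b c)%:E - f b)%E | b in [set: B]].

Definition BC_function (bf : B -> B -> R) (f : B -> \bar R) : Prop :=
  proper_convex f /\
  (forall b, (fat bf f b >= f b)%E /\ (f b >= (qf bf b)%:E)%E).

Definition Pq (bf : B -> B -> R) (h : B -> \bar R) : set B :=
  [set b | h b = (qf bf b)%:E].
Definition Nq (bf : B -> B -> R) (h : B -> R) : set B :=
  [set b | h b = - qf bf b].

Definition diff_is_all (A C : set B) : Prop :=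
  forall b : B, exists a, exists c, [/\ A a, C c & b = a - c].

Definition q_positive (bf : B -> B -> R) (A : set B) : Prop :=
  A !=set0 /\ (forall b c, A b -> A c -> 0 <= qf bf (b - c)).

Definition max_q_positive (bf : B -> B -> R) (A : set B) : Prop :=
  q_positive bf A /\
  (forall A' : set B, q_positive bf A' -> A `<=` A' -> A' = A).

End Defs.

(* Main.v *)
Require Import Defs.
From HB Require Import structures.
From mathcomp Require Import all_boot all_order all_algebra.
From mathcomp Require Import all_classical all_reals all_analysis.
From mathcomp Require Import ring lra.
Import Order.TTheory GRing.Theory Num.Theory.
Import numFieldNormedType.Exports.
Local Open Scope classical_set_scope.
Local Open Scope ring_scope.
Lemma lin_bounded_cont {R : realType} {V : normedModType R} (psi : V -> R) M :
  0 < M -> (forall x y, psi (x - y) = psi x - psi y) ->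
  (forall x, `|psi x| <= M * `|x|) -> continuous psi.
Proof.
move=> M0 psiB H x.
apply/(@cvgrPdist_lt _ _ _ (nbhs x)) => e e0; near=> z.
rewrite -psiB; apply: (le_lt_trans (H _)).
rewrite -ltr_pdivlMl //.
near: z; apply: cvgr_dist_lt; [exact: cvg_id | by rewrite mulr_gt0 ?invr_gt0].
Unshelve. all: by end_near. Qed.

Section BL.
Context {R : realType} {B : completeNormedModType R} (bf : B -> B -> R).
Hypothesis hbf : symmetric_bilinear bf.

Lemma bfC x y : bf x y = bf y x. Proof. by case: hbf. Qed.
Lemma bfDl x y c : bf (x + y) c = bf x c + bf y c.
Proof. by case: hbf => _ H; have := H 1 1 x y c; rewrite !scale1r !mul1r. Qed.
Lemma bfZl a x c : bf (a *: x) c = a * bf x c.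
Proof.
case: hbf => _ H; have := H a 0 x x c; rewrite scale0r addr0 mul0r addr0 //.
Qed.
Lemma bf0l c : bf 0 c = 0.
Proof. by have := bfZl 0 0 c; rewrite scale0r mul0r. Qed.
Lemma bfNl x c : bf (- x) c = - bf x c.
Proof. by rewrite -scaleN1r bfZl mulN1r. Qed.
Lemma bfBl x y c : bf (x - y) c = bf x c - bf y c.
Proof. by rewrite bfDl bfNl. Qed.
Lemma bfDr x y c : bf c (x + y) = bf c x + bf c y.
Proof. by rewrite bfC bfDl !(bfC c). Qed.
Lemma bfZr a x c : bf c (a *: x) = a * bf c x.
Proof. by rewrite bfC bfZl bfC. Qed.
Lemma bfNr x c : bf c (- x) = - bf c x.
Proof. by rewrite bfC bfNl bfC. Qed.
Lemma bfBr x y c : bf c (x - y) = bf c x - bf c y.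
Proof. by rewrite bfDr bfNr. Qed.
Lemma bf0r c : bf c 0 = 0.
Proof. by rewrite bfC bf0l. Qed.

Lemma qfD x y : qf bf (x + y) = qf bf x + qf bf y + bf x y.
Proof. rewrite /qf bfDl !bfDr (bfC y x); by field. Qed.
Lemma qfB x y : qf bf (x - y) = qf bf x + qf bf y - bf x y.
Proof. rewrite /qf bfBl !bfBr (bfC y x); by field. Qed.
Lemma qfZ a x : qf bf (a *: x) = a ^+ 2 * qf bf x.
Proof. rewrite /qf bfZl bfZr; ring. Qed.
Lemma qfN x : qf bf (- x) = qf bf x.
Proof. by rewrite -scaleN1r qfZ expr2 mulN1r opprK mul1r. Qed.

End BL.
Definition PG {R : realType} {V : lmodType R} (k : V -> R) (G : set (V * R)) :=
  (forall p q a, G p -> G q -> G (p.1 + a *: q.1, p.2 + a * q.2)) /\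
  (forall p, G p -> p.2 <= k p.1).

Lemma PG0 {R : realType} {V : lmodType R} (k : V -> R) G p :
  PG k G -> G p -> G (0, 0).
Proof.
move=> [cl _] Gp; have := cl p p (-1) Gp Gp.
by rewrite scaleN1r mulN1r !subrr.
Qed.

Lemma PG_fun {R : realType} {V : lmodType R} (k : V -> R) G x r r' :
  PG k G -> G (x, r) -> G (x, r') -> r = r'.
Proof.
move=> PGG Gr Gr'; have [cl dom] := PGG.
have G0 := PG0 _ _ _ PGG Gr.
have Gd := cl _ _ (-1) Gr Gr'; rewrite /= scaleN1r mulN1r subrr in Gd.
apply/eqP; rewrite -subr_eq0; apply/negP => /negP nz.
have := dom _ (cl _ _ ((k 0 + 1) / (r - r')) G0 Gd).
rewrite /= scaler0 addr0 add0r mulfVK //; lra.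
Qed.
Lemma key_ineq {R : realType} {V : lmodType R} (k : V -> R) G v x1 r1 x2 r2 s t :
  (forall x y (l : R), 0 < l < 1 -> k (l *: x + (1 - l) *: y) <= l * k x + (1 - l) * k y) ->
  PG k G -> G (x1, r1) -> G (x2, r2) -> 0 < s -> 0 < t ->
  (r1 - k (x1 - s *: v)) / s <= (k (x2 + t *: v) - r2) / t.
Proof.
move=> kconv PGG G1 G2 s0 t0.
have [cl dom] := PGG.
have G0 := PG0 _ _ _ PGG G1.
set l := t / (s + t).
have st0 : 0 < s + t by rewrite addr_gt0.
have l01 : 0 < l < 1.
  apply/andP; split; first by rewrite divr_gt0.
  by rewrite ltr_pdivrMr // mul1r ltrDr.
have e1 : 1 - l = s / (s + t).
  by rewrite /l; field; rewrite lt0r_neq0.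
have Gc := cl _ _ (1 - l) (cl _ _ l G0 G1) G2.
have := dom _ Gc; rewrite /= !add0r.
have -> : l *: x1 + (1 - l) *: x2 = l *: (x1 - s *: v) + (1 - l) *: (x2 + t *: v).
  rewrite scalerBr scalerDr !scalerA addrACA.
  have -> : (1 - l) * t = l * s by rewrite e1 /l; field; rewrite lt0r_neq0.
  by rewrite addNr addr0.
move=> /le_trans /(_ (kconv _ _ _ l01)).
set K1 := k (x1 - s *: v); set K2 := k (x2 + t *: v) => H.
rewrite ler_pdivrMr // mulrAC ler_pdivlMr //.
have H2 := ler_wpM2l (ltW st0) H.
rewrite !mulrDr !mulrA e1 !(mulrC (s + t)) /l !divfK ?mulfK ?lt0r_neq0 // in H2.
move: H2; rewrite -/K1 -/K2. lra.
Qed.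
Lemma PG_ext {R : realType} {V : lmodType R} (k : V -> R) A v :
  (forall x y (l : R), 0 < l < 1 -> k (l *: x + (1 - l) *: y) <= l * k x + (1 - l) * k y) ->
  PG k A -> A !=set0 -> (forall r, ~ A (v, r)) ->
  exists A', PG k A' /\ A `<` A'.
Proof.
move=> kconv PGA [p0 Ap0] nv.
have [cl dom] := PGA.
have A0 := PG0 _ _ _ PGA Ap0.
pose L := [set l | exists x r s, [/\ A (x, r), 0 < s & l = (r - k (x - s *: v)) / s]].
pose U := [set u | exists x r t, [/\ A (x, r), 0 < t & u = (k (x + t *: v) - r) / t]].
have LU : forall l u, L l -> U u -> l <= u.
  move=> _ _ [x1 [r1 [s [A1 s0 ->]]]] [x2 [r2 [t [A2 t0 ->]]]].
  exact: (@key_ineq _ _ k A v x1 r1 x2 r2 s t kconv PGA A1 A2 s0 t0).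
have L0 : L ((0 - k (0 - 1 *: v)) / 1) by exists 0, 0, 1; split.
have U0 : U ((k (0 + 1 *: v) - 0) / 1) by exists 0, 0, 1; split.
pose a := sup L.
have hsL : has_sup L by split; [exists ((0 - k (0 - 1 *: v)) / 1) | exists ((k (0 + 1 *: v) - 0) / 1) => l Ll; exact: LU].
have La : forall l, L l -> l <= a by move=> l Ll; exact: sup_upper_bound.
have aU : forall u, U u -> a <= u.
  by move=> u Uu; apply: ge_sup; [exists ((0 - k (0 - 1 *: v)) / 1) | move=> l Ll; exact: LU].
pose A' := [set z | exists x r t, A (x, r) /\ z = (x + t *: v, r + t * a)].
exists A'; split; last split.
- split.
  + move=> _ _ b [x1 [r1 [t1 [A1 ->]]]] [x2 [r2 [t2 [A2 ->]]]] /=.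
    exists (x1 + b *: x2), (r1 + b * r2), (t1 + b * t2); split; first exact: (cl _ _ b A1 A2).
    congr pair; last by ring.
    by rewrite scalerDr !scalerA scalerDl -!addrA; congr (_ + _); rewrite addrCA.
  + move=> _ [x [r [t [Axr ->]]]] /=.
    case: (ltgtP t 0) => [tlt|tgt|->]; last first.
    * by rewrite scale0r mul0r !addr0; exact: (dom _ Axr).
    * have := aU _ (ex_intro _ x (ex_intro _ r (ex_intro _ t (And3 Axr tgt erefl)))).
      rewrite ler_pdivlMr // => H; lra.
    * have s0 : 0 < - t by rewrite oppr_gt0.
      have := La _ (ex_intro _ x (ex_intro _ r (ex_intro _ (- t) (And3 Axr s0 erefl)))).
      rewrite scaleNr opprK ler_pdivrMr // => H; lra.
- case=> x r Axr; exists x, r, 0; split => //.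
  by rewrite scale0r mul0r !addr0.
- move=> /(_ (v, a)) H; apply: (nv a); apply: H.
  by exists 0, 0, 1; split => //; rewrite scale1r mul1r !add0r.
Qed.
Lemma HahnBanach_convex {R : realType} {V : lmodType R} (k : V -> R) :
  (forall x y (l : R), 0 < l < 1 -> k (l *: x + (1 - l) *: y) <= l * k x + (1 - l) * k y) ->
  0 <= k 0 ->
  exists psi : V -> R,
    (forall (s t : R) x y, psi (s *: x + t *: y) = s * psi x + t * psi y) /\
    forall x, psi x <= k x.
Proof.
move=> kconv k0.
have chain : forall F : set (set (V * R)), F `<=` PG k -> total_on F subset ->
    PG k (\bigcup_(X in F) X).
  move=> F FP Ftot; split.
  - move=> p q a [X FX Xp] [Y FY Yq].
    case: (Ftot X Y FX FY) => [XY|YX].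
    + by exists Y => //; apply: (FP Y FY).1 => //; exact: XY.
    + by exists X => //; apply: (FP X FX).1 => //; exact: YX.
  - by move=> p [X FX Xp]; exact: (FP X FX).2.
have [A [PA Amax]] := Zorn_bigcup chain.
have PG00 : PG k [set (0 : V, 0 : R)].
  split; first by move=> p q a -> -> /=; rewrite scaler0 mulr0 !addr0.
  by move=> p ->.
have [[p0 Ap0]|nA] := pselect (A !=set0); last first.
  exfalso; apply: (Amax [set (0, 0)]) => //; split.
  - by move=> z Az; exfalso; apply: nA; exists z.
  - by move=> /(_ (0, 0) erefl) H; apply: nA; exists (0, 0).
have Adom : forall x, exists r, A (x, r).
  move=> v; have [//|nv] := pselect (exists r, A (v, r)).
  have [A' [PA' AA']] := PG_ext _ _ _ kconv PA (ex_intro _ p0 Ap0) (fun r Ar => nv (ex_intro _ r Ar)).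
  by exfalso; exact: (Amax A' AA').
pose psi x := xget 0 [set r | A (x, r)].
have Apsi : forall x, A (x, psi x) by move=> x; exact: (xgetPex 0 (Adom x)).
have [cl dom] := PA.
have A0 := PG0 _ _ _ PA Ap0.
exists psi; split; last by move=> x; exact: (dom _ (Apsi x)).
move=> s t x y.
have := cl _ _ t (cl _ _ s A0 (Apsi x)) (Apsi y); rewrite /= !add0r => H.
exact: (PG_fun _ _ _ _ _ PA (Apsi _) H).
Qed.
Section Core.
Context {R : realType} {B : completeNormedModType R} (bf : B -> B -> R).
Hypothesis hS : SSDB bf.

Let hbf : symmetric_bilinear bf. Proof. by case: hS. Qed.

Lemma g0_conv (x y : B) (l : R) : 0 < l < 1 ->
  g0 (l *: x + (1 - l) *: y) <= l * g0 x + (1 - l) * g0 y.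
Proof.
move=> /andP[l0 l1]; rewrite /g0.
have l0' : 0 <= l by exact: ltW.
have l1' : 0 <= 1 - l by rewrite subr_ge0 ltW.
have n1 : `|l *: x + (1 - l) *: y| <= l * `|x| + (1 - l) * `|y|.
  apply: (le_trans (ler_normD _ _)).
  by rewrite !normrZ !ger0_norm.
have := normr_ge0 (l *: x + (1 - l) *: y).
have := normr_ge0 x; have := normr_ge0 y.
move: n1.
set a := `|x|; set b := `|y|; set c := `|_ + _|.
move=> n1 b0 a0 c0.
have h1 : c ^+ 2 <= (l * a + (1 - l) * b) ^+ 2.
  have : 0 <= (l * a + (1 - l) * b - c) * (l * a + (1 - l) * b + c).
    by apply: mulr_ge0; lra.
  rewrite !expr2; lra.
have h2 : 0 <= l * (1 - l) * ((a - b) * (a - b)).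
  by apply: mulr_ge0; [exact: mulr_ge0 | rewrite -expr2 sqr_ge0].
rewrite !expr2 in h1 *; nra.
Qed.

Lemma q_ge_g0 (b : B) : - g0 b <= qf bf b.
Proof.
case: hS => _ _ iso _; have [H _] := iso b; have := H b.
rewrite /qf /g0 => Hb; have := ler_norml (bf b b) (`|b| * `|b|).
rewrite Hb => /esym /andP [Hb1 _]; rewrite expr2; lra.
Qed.


Lemma half01 : 0 < (2^-1 : R) < 1.
Proof. by apply/andP; split; [rewrite invr_gt0 ltr0n | rewrite invf_lt1 ?ltr1n ?ltr0n]. Qed.

Lemma half_half : 1 - 2^-1 = 2^-1 :> R.
Proof. by field. Qed.

Lemma core (D : set B) (F : B -> R) :
  D !=set0 ->
  (forall x y l, D x -> D y -> 0 < l < 1 ->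
     D (l *: x + (1 - l) *: y) /\ F (l *: x + (1 - l) *: y) <= l * F x + (1 - l) * F y) ->
  (forall y, D y -> 0 <= F y + g0 y) ->
  exists d, forall y, D y -> bf y d + g0 d <= F y.
Proof.
move=> [y0 Dy0] Fconv Fpos.
pose S x := [set F y + g0 (y - x) | y in D].
have lbS : forall x y, D y -> - (F y0 + g0 (y0 + x)) <= F y + g0 (y - x).
  move=> x y Dy.
  have [Dm Fm] := Fconv y y0 2^-1 Dy Dy0 half01.
  have gm := g0_conv (y - x) (y0 + x) 2^-1 half01.
  have e : 2^-1 *: (y - x) + (1 - 2^-1) *: (y0 + x) = 2^-1 *: y + (1 - 2^-1) *: y0.
    by rewrite half_half -!scalerDr addrACA addNr addr0.
  rewrite e in gm; have := Fpos _ Dm; rewrite !half_half in Fm gm *; lra.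
have hinf : forall x, has_inf (S x).
  move=> x; split; first by exists (F y0 + g0 (y0 - x)), y0.
  by exists (- (F y0 + g0 (y0 + x))) => _ [y Dy <-]; exact: lbS.
pose h x := inf (S x).
have hle : forall x y, D y -> h x <= F y + g0 (y - x).
  by move=> x y Dy; apply: (ge_inf (hinf x).2); exists y.
have h0 : 0 <= h 0.
  apply: lb_le_inf; first exact: (hinf 0).1.
  by move=> _ [y Dy <-]; rewrite subr0; exact: Fpos.
have hconv : forall x1 x2 (l : R), 0 < l < 1 ->
    h (l *: x1 + (1 - l) *: x2) <= l * h x1 + (1 - l) * h x2.
  move=> x1 x2 l l01; set z := l *: x1 + (1 - l) *: x2.
  have key : forall y1 y2, D y1 -> D y2 ->
      h z <= l * (F y1 + g0 (y1 - x1)) + (1 - l) * (F y2 + g0 (y2 - x2)).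
    move=> y1 y2 D1 D2; have [Dm Fm] := Fconv _ _ _ D1 D2 l01.
    apply: le_trans (hle _ _ Dm) _.
    have gm := g0_conv (y1 - x1) (y2 - x2) l l01.
    have -> : l *: y1 + (1 - l) *: y2 - z = l *: (y1 - x1) + (1 - l) *: (y2 - x2).
      by rewrite /z !scalerBr opprD addrACA.
    lra.
  have /andP [l0 l1] := l01.
  have l1' : 0 < 1 - l by rewrite subr_gt0.
  have step1 : forall y2, D y2 -> (h z - (1 - l) * (F y2 + g0 (y2 - x2))) / l <= h x1.
    move=> y2 D2; apply: lb_le_inf; first exact: (hinf x1).1.
    move=> _ [y1 D1 <-]; rewrite ler_pdivrMr //; have := key _ _ D1 D2; lra.
  have step2 : (h z - l * h x1) / (1 - l) <= h x2.
    apply: lb_le_inf; first exact: (hinf x2).1.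
    move=> _ [y2 D2 <-]; rewrite ler_pdivrMr //.
    have := step1 _ D2; rewrite ler_pdivrMr //; lra.
  by move: step2; rewrite ler_pdivrMr //; lra.
have [psi [psilin psih]] := HahnBanach_convex h hconv h0.
have psiZ : forall a x, psi (a *: x) = a * psi x.
  by move=> a x; have := psilin a 0 x x; rewrite scale0r addr0 mul0r addr0.
have psiB : forall x y, psi (x - y) = psi x - psi y.
  by move=> x y; have := psilin 1 (-1) x y; rewrite scale1r scaleN1r mul1r mulN1r.
have psi0 : psi 0 = 0 by have := psiZ 0 0; rewrite scale0r mul0r.
pose M := F y0 + 2^-1 * (`|y0| + 1) ^+ 2.
have psiM : forall x, `|x| <= 1 -> psi x <= M.
  move=> x nx; apply: le_trans (psih x) _; apply: le_trans (hle x y0 Dy0) _.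
  rewrite /M lerD2l /g0 ler_wpM2l ?invr_ge0 ?ler0n //.
  have n1 : `|y0 - x| <= `|y0| + 1.
    by apply: le_trans (ler_normB _ _) _; rewrite lerD2l.
  have := normr_ge0 (y0 - x); rewrite !expr2; nra.
have M0 : 0 <= M by rewrite -psi0; apply: psiM; rewrite normr0.
have psibd : forall x, `|psi x| <= (M + 1) * `|x|.
  move=> x; have [->|x0] := eqVneq x 0; first by rewrite psi0 !normr0 mulr0.
  set u := `|x|^-1 *: x.
  have nu : `|u| = 1 by rewrite normrZ normfV normr_id mulVf ?normr_eq0.
  have ex : x = `|x| *: u by rewrite /u scalerA mulfV ?normr_eq0 // scale1r.
  rewrite {1}ex psiZ normrM normr_id mulrC ler_wpM2r //.
  have := psiM u; rewrite nu => /(_ (lexx _)) h1.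
  have := psiM (- u); rewrite normrN nu => /(_ (lexx _)).
  rewrite -scaleN1r psiZ => h2.
  rewrite ler_norml; apply/andP; split; lra.
have cont : continuous psi.
  apply: (@lin_bounded_cont _ _ psi (M + 1) _ psiB psibd); lra.
case: hS => _ _ iso surj.
have [d hd] := surj psi psilin cont.
exists d => y Dy.
have base : forall x, psi x <= F y + g0 (y - x).
  by move=> x; exact: le_trans (psih x) (hle x y Dy).
apply/ler_addgt0Pr => e e0.
have nd0 : 0 < `|d| + 1 by rewrite ltr_wpDl.
set e' := e / (`|d| + 1).
have e'0 : 0 < e' by rewrite divr_gt0.
have [b [nb hb]] := (iso d).2 e' e'0.
have [b' [nb' hb']] : exists b', `|b'| <= 1 /\ `|d| - e' < bf b' d.
  case: (lerP 0 (bf b d)) => hbd.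
    by exists b; rewrite -(ger0_norm hbd).
  exists (- b); rewrite normrN bfNl //; split => //.
  by rewrite -(ltr0_norm hbd).
have := base (y + `|d| *: b').
rewrite !hd bfDl // bfZl // opprD addrA subrr add0r /g0 normrN normrZ normr_id.
have h1 : `|d| * (`|d| - e') <= `|d| * bf b' d by rewrite ler_wpM2l // ltW.
have h2 : (`|d| * `|b'|) ^+ 2 <= `|d| ^+ 2.
  rewrite exprMn; apply: ler_piMr; first exact: sqr_ge0.
  by rewrite expr_le1.
have h3 : e' * `|d| <= e.
  have -> : e = e' * (`|d| + 1) by rewrite /e' divfK // gt_eqF.
  by apply: ler_wpM2l; [exact: ltW | lra].
move: h1 h2 h3; rewrite !expr2 mulrBr (mulrC e'); lra.
Qed.
End Core.
Lemma sub_le_E {R : realType} (x K : R) (e : \bar R) :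
  ((x - K)%:E <= e)%E -> (x%:E - e <= K%:E)%E.
Proof.
case: e => [r||] //=.
- by rewrite -EFinB !lee_fin; lra.
- by move=> _; rewrite addeNy leNye.
Qed.

Lemma sub_le_E' {R : realType} (x K : R) (e : \bar R) :
  (x%:E - e <= K%:E)%E -> e != -oo%E -> ((x - K)%:E <= e)%E.
Proof.
case: e => [r||] //=.
- by rewrite -EFinB !lee_fin; lra.
- by move=> _ _; rewrite leey.
Qed.

Lemma lim_t {R : realType} (X Y Q : R) :
  (forall t, 0 < t < 1 -> X <= Y - t * Q) -> X <= Y.
Proof.
move=> H; apply/ler_addgt0Pr => e e0.
have nQ := normr_ge0 Q.
have d0 : 0 < e + e + `|Q| by lra.
set t := e / (e + e + `|Q|).
have t0 : 0 < t by rewrite divr_gt0.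
have t1 : t < 1 by rewrite /t ltr_pdivrMr // mul1r; lra.
have := H t; rewrite t0 t1 => /(_ isT).
have h1 : - (t * Q) <= t * `|Q|.
  have hq : - Q <= `|Q| by rewrite -normrN ler_norm.
  by rewrite -mulrN; apply: ler_wpM2l => //; exact: ltW.
have h2 : t * `|Q| <= e.
  rewrite /t mulrAC ler_pdivrMr //; nra.
lra.
Qed.
Section Main.
Context {R : realType} {B : completeNormedModType R} (bf : B -> B -> R).
Hypothesis hS : SSDB bf.

Let hbf : symmetric_bilinear bf. Proof. by case: hS. Qed.

Lemma fin_of (f : B -> \bar R) b : proper_convex f -> f b != +oo%E -> f b = (fine (f b))%:E.
Proof.
move=> [ninf _ _] fb; rewrite fineK // fin_numE fb andbT; exact: ninf.
Qed.

Lemma key_ereal (f : B -> \bar R) c : proper_convex f ->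
  (forall b, ((qf bf b)%:E <= f b)%E) ->
  exists d, forall b, ((bf b (d + c) - (bf c d + qf bf c - g0 d))%:E <= f b)%E.
Proof.
move=> pf fq; have [ninf [b1 fb1] fconv] := pf.
pose D := [set y | f (y + c) != +oo%E].
pose F y := fine (f (y + c)) - bf y c - qf bf c.
have D0 : D !=set0 by exists (b1 - c); rewrite /D /= subrK.
have Fconv : forall x y l, D x -> D y -> 0 < l < 1 ->
    D (l *: x + (1 - l) *: y) /\ F (l *: x + (1 - l) *: y) <= l * F x + (1 - l) * F y.
  move=> x y l Dx Dy l01.
  have e : l *: x + (1 - l) *: y + c = l *: (x + c) + (1 - l) *: (y + c).
    by rewrite !scalerDr addrACA -scalerDl addrCA subrr addr0 scale1r.
  have H := fconv (x + c) (y + c) l l01.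
  rewrite -e (fin_of _ _ pf Dx) (fin_of _ _ pf Dy) -!EFinM -EFinD in H.
  have Dz : D (l *: x + (1 - l) *: y).
    by rewrite /D /=; apply/negP => /eqP Hz; rewrite Hz leye_eq in H.
  split => //.
  rewrite (fin_of _ _ pf Dz) lee_fin in H.
  rewrite /F (bfDl _ hbf) !(bfZl _ hbf). lra.
have Fpos : forall y, D y -> 0 <= F y + g0 y.
  move=> y Dy; have := fq (y + c); rewrite (fin_of _ _ pf Dy) lee_fin (qfD _ hbf).
  have := q_ge_g0 _ hS y; rewrite /F; lra.
have [d hd] := core _ hS D F D0 Fconv Fpos.
exists d => b.
have [fbinf|fbfin] := eqVneq (f b) +oo%E; first by rewrite fbinf leey.
have Db : D (b - c) by rewrite /D /= subrK.
have := hd _ Db; rewrite /F subrK (fin_of _ _ pf fbfin) lee_fin.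
rewrite !(bfBl _ hbf) (bfDr _ hbf) /qf (bfC _ hbf c d); lra.
Qed.


Lemma decomp (f : B -> \bar R) : proper_convex f -> (forall b, ((qf bf b)%:E <= f b)%E) ->
  (forall a (K : R), (forall b, ((bf b a)%:E - f b <= K%:E)%E) -> (f a <= K%:E)%E) ->
  diff_is_all (Pq bf f) (Nq bf (@g0 R B)).
Proof.
move=> pf fq Up c.
have [d hd] := key_ereal f c pf fq.
set K := bf c d + qf bf c - g0 d.
have fa : (f (d + c)%R <= K%:E)%E by apply: Up => b; apply: sub_le_E; exact: hd.
have qa := le_trans (fq (d + c)) fa.
have eq : qf bf (d + c) = qf bf d + qf bf c + bf c d by rewrite (qfD _ hbf) (bfC _ hbf d c).
rewrite lee_fin eq in qa.
have gq := q_ge_g0 _ hS d.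
have Nd : g0 d = - qf bf d by rewrite /K in qa; lra.
exists (d + c), d; split => //; last by rewrite addrAC subrr add0r.
apply/le_anti; rewrite fq andbT; apply: (le_trans fa).
by rewrite lee_fin eq /K; lra.
Qed.


Lemma part_b (A : set B) : q_positive bf A -> diff_is_all A (Nq bf (@g0 R B)) ->
  max_q_positive bf A.
Proof.
move=> qA dA; split => // A' qA' AA'.
apply/seteqP; split; last exact: AA'.
move=> b A'b; have [a [n [Aa Nn eb]]] := dA b.
have := qA'.2 _ _ A'b (AA' _ Aa).
rewrite eb addrAC subrr add0r (qfN _ hbf).
move: Nn; rewrite /Nq /= /g0 => Nn qn.
have gn : `|n| ^+ 2 = 0.
  have := sqr_ge0 `|n|; lra.
move/eqP: gn; rewrite sqrf_eq0 normr_eq0 => /eqP n0.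
by rewrite n0 subr0.
Qed.

Lemma part_a (f : B -> \bar R) : BC_function bf f ->
  diff_is_all (Pq bf f) (Nq bf (@g0 R B)).
Proof.
move=> [pf hf]; apply: decomp => //; first by move=> b; exact: (hf b).2.
move=> a K H; apply: le_trans (hf a).1 _.
by apply: ge_ereal_sup => _ [b _ <-]; exact: H.
Qed.

Lemma part_c1 (f : B -> \bar R) : BC_function bf f -> q_positive bf (Pq bf f).
Proof.
move=> BCf; split.
  by have [a [n [Pa _ _]]] := part_a f BCf 0; exists a.
move=> b c Pb Pc.
have [[_ _ fconv] hf] := BCf.
have := fconv b c 2^-1 half01.
rewrite half_half Pb Pc -!EFinM -EFinD => H.
have e1 : qf bf (2^-1 *: b + 2^-1 *: c) =
    2^-1 ^+ 2 * qf bf b + 2^-1 ^+ 2 * qf bf c + 2^-1 * (2^-1 * bf b c).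
  by rewrite (qfD _ hbf) (qfZ _ hbf _ b) (qfZ _ hbf _ c) (bfZl _ hbf) (bfZr _ hbf).
have := le_trans (hf _).2 H; rewrite lee_fin e1 (qfB _ hbf) => H2.
have e : (2^-1 : R) ^+ 2 = 2^-1 * 2^-1 by rewrite expr2.
rewrite e in H2.
have h2 : (0 : R) < 2^-1 by rewrite invr_gt0.
nra.
Qed.

Lemma part_c2 (f : B -> \bar R) : BC_function bf f -> Pq bf (fat bf f) = Pq bf f.
Proof.
move=> [pf hf]; have [_ _ fconv] := pf.
apply/seteqP; split => b; rewrite /Pq /=.
  move=> Hb; apply/le_anti; rewrite (hf b).2 andbT -Hb; exact: (hf b).1.
move=> Hb; apply/le_anti; apply/andP; split; last first.
  by rewrite -Hb; exact: (hf b).1.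
apply: ge_ereal_sup => _ [c _ <-].
have [fcinf|fcfin] := eqVneq (f c) +oo%E; first by rewrite fcinf addeNy leNye.
rewrite (fin_of _ _ pf fcfin) -EFinB lee_fin.
set fr := fine (f c).
apply: (@lim_t _ _ _ (qf bf c + qf bf b - bf c b)) => t t01.
have /andP [t0 t1] := t01.
have := fconv c b t t01.
rewrite Hb (fin_of _ _ pf fcfin) -!EFinM -EFinD => H.
have := le_trans (hf _).2 H; rewrite lee_fin (qfD _ hbf) (qfZ _ hbf _ c) (qfZ _ hbf _ b) (bfZl _ hbf) (bfZr _ hbf) -/fr.
move=> H2.
have H3 : t * (bf c b - fr) <= t * (qf bf b - t * (qf bf c + qf bf b - bf c b)).
  rewrite !expr2 in H2; nra.
by move: H3; rewrite ler_pM2l.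
Qed.


Let Phi (A : set B) (b : B) : \bar R := ereal_sup [set (bf a b - qf bf a)%:E | a in A].

Lemma Phi_on_A (A : set B) : q_positive bf A -> forall a, A a -> Phi A a = (qf bf a)%:E.
Proof.
move=> qA a Aa; apply/le_anti/andP; split.
- apply: ge_ereal_sup => _ [a' Aa' <-]; rewrite lee_fin.
  have := qA.2 _ _ Aa Aa'; rewrite (qfB _ hbf) (bfC _ hbf a' a); lra.
- apply: ereal_sup_ubound; exists a => //; congr EFin; rewrite /qf; lra.
Qed.

Lemma qf0 : qf bf 0 = 0.
Proof. by rewrite /qf (bf0l _ hbf) mulr0. Qed.

Lemma Phi_le_in (A : set B) : max_q_positive bf A ->
  forall b, (Phi A b <= (qf bf b)%:E)%E -> A b.
Proof.
move=> [qA maxA] b Hb.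
have qb : forall a, A a -> 0 <= qf bf (b - a).
  move=> a Aa.
  have : ((bf a b - qf bf a)%:E <= Phi A b)%E by apply: ereal_sup_ubound; exists a.
  move=> /le_trans /(_ Hb); rewrite lee_fin (qfB _ hbf) (bfC _ hbf a b); lra.
have qA' : q_positive bf (A `|` [set b]).
  split; first by have [a Aa] := qA.1; exists a; left.
  move=> x y [Ax|->] [Ay|->].
  - exact: qA.2.
  - by rewrite -opprB (qfN _ hbf); exact: qb.
  - exact: qb.
  - by rewrite subrr qf0.
have E := maxA _ qA' (@subsetUl _ A [set b]).
by rewrite -E; right.
Qed.

Lemma Phi_ge (A : set B) : max_q_positive bf A -> forall b, ((qf bf b)%:E <= Phi A b)%E.
Proof.
move=> mA b; case: (leP ((qf bf b)%:E) (Phi A b)) => // lt.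
have Ab := Phi_le_in _ mA _ (ltW lt).
by rewrite Phi_on_A ?ltxx in lt => //; case: mA.
Qed.

Lemma Phi_proper (A : set B) : q_positive bf A -> proper_convex (Phi A).
Proof.
move=> qA; have [a0 Aa0] := qA.1; split.
- move=> b; have h : ((bf a0 b - qf bf a0)%:E <= Phi A b)%E.
    by apply: ereal_sup_ubound; exists a0.
  by move: h; case: (Phi A b).
- by exists a0; rewrite Phi_on_A.
- move=> x y t t01; have /andP [t0 t1] := t01.
  apply: ge_ereal_sup => _ [a Aa <-].
  have -> : (bf a (t *: x + (1 - t) *: y) - qf bf a)%:E =
      (t%:E * (bf a x - qf bf a)%:E + (1 - t)%:E * (bf a y - qf bf a)%:E)%E.
    rewrite -!EFinM -EFinD (bfDr _ hbf) (bfZr _ hbf t) (bfZr _ hbf (1 - t)).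
    by congr EFin; ring.
  apply: leeD; apply: lee_wpmul2l;
    (try by rewrite lee_fin ?subr_ge0 ltW); by apply: ereal_sup_ubound; exists a.
Qed.

Lemma part_d_fwd (A : set B) : max_q_positive bf A -> diff_is_all A (Nq bf (@g0 R B)).
Proof.
move=> mA; have qA := mA.1.
have D := decomp _ (Phi_proper _ qA) (Phi_ge _ mA).
have : diff_is_all (Pq bf (Phi A)) (Nq bf (@g0 R B)).
  apply: D => a K H; apply: ge_ereal_sup => _ [a' Aa' <-].
  by have := H a'; rewrite Phi_on_A // -EFinB.
move=> Hd b; have [a [n [Pa Nn eb]]] := Hd b.
exists a, n; split => //; apply: (Phi_le_in _ mA); by rewrite Pa.
Qed.

End Main.

Theorem theorem4p4 (R : realType) (B : completeNormedModType R)
    (bf : B -> B -> R) :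
  SSDB bf ->
  [/\ (forall f : B -> \bar R, BC_function bf f ->
         diff_is_all (Pq bf f) (Nq bf (@g0 R B))),
      (forall A : set B, q_positive bf A ->
         diff_is_all A (Nq bf (@g0 R B)) -> max_q_positive bf A),
      (forall f : B -> \bar R, BC_function bf f ->
         max_q_positive bf (Pq bf f) /\ Pq bf (fat bf f) = Pq bf f)
    & (forall A : set B, q_positive bf A ->
         (max_q_positive bf A <-> diff_is_all A (Nq bf (@g0 R B))))].
Proof.
move=> hS; split.
- exact: part_a.
- exact: part_b.
- move=> f BCf; split; last exact: part_c2.
  apply: part_b => //; [exact: part_c1 | exact: part_a].
- move=> A qA; split; [exact: part_d_fwd | exact: part_b].
Qed.
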